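(* Let $X,Y$ be Banach lattices and $S\colon X\to Y$ convex. Then the following are equivalent: (i) $S$ is continuous; (ii) for every $x\in X$ there exists $r>0$ such that $\|S_x\|_r<\infty$.
   Context: An operator $S\colon X\to Y$ is convex if $S(\lambda x+(1-\lambda)y)\le\lambda Sx+(1-\lambda)Sy$ for all $x,y\in X$, $\lambda\in[0,1]$. $S_xy:=S(x+y)-Sx$ for $x,y\in X$, and $\|T\|_r:=\sup_{\|y\|\le r}\|Ty\|$. *)

(* Defs.v *)
From HB Require Import structures.
From mathcomp Require Import all_boot all_order all_algebra.
From mathcomp Require Import all_classical all_reals all_analysis.
Set Implicit Arguments. Unset Strict Implicit. Unset Printing Implicit Defensive.
Import Order.TTheory GRing.Theory Num.Theory.
Import numFieldNormedType.Exports.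
Local Open Scope ring_scope.

Definition is_sup (T : Type) (le : T -> T -> Prop) (x y z : T) : Prop :=
  [/\ le x z, le y z & forall w, le x w -> le y w -> le z w].

(* A Banach lattice: a real Banach space X (completeNormedModType over a
   realType) with a partial order le that is a lattice order (every pair has
   a supremum), compatible with the vector operations, and such that
   |x| <= |y| implies ||x|| <= ||y||, where |x| = x \/ (-x). *)
Definition banach_lattice (R : realType) (X : completeNormedModType R)
    (le : X -> X -> Prop) : Prop :=
  [/\ (forall x, le x x),
      (forall x y, le x y -> le y x -> x = y),
      (forall x y z, le x y -> le y z -> le x z)
    & (forall x y, exists z, is_sup le x y z)] /\
  [/\
      (forall x y z, le x y -> le (x + z) (y + z)),
      (forall (a : R) x y, 0 <= a -> le x y -> le (a *: x) (a *: y))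
    & (forall x y ax ay, is_sup le x (- x) ax -> is_sup le y (- y) ay ->
         le ax ay -> `|x| <= `|y|)].

Definition convex_op (R : realType) (X Y : normedModType R)
    (leY : Y -> Y -> Prop) (S : X -> Y) : Prop :=
  forall (x y : X) (l : R), 0 <= l <= 1 ->
    leY (S (l *: x + (1 - l) *: y)) (l *: S x + (1 - l) *: S y).

Definition Sx (R : realType) (X Y : normedModType R) (S : X -> Y) (x : X)
  : X -> Y := fun y => S (x + y) - S x.

(* ||T||_r < oo, i.e. sup_{||y|| <= r} ||T y|| is finite *)
Definition bounded_on_ball (R : realType) (X Y : normedModType R)
    (T : X -> Y) (r : R) : Prop :=
  exists M : R, forall y : X, `|y| <= r -> `|T y| <= M.

(* Main.v *)
Require Import Defs.
From HB Require Import structures.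
From mathcomp Require Import all_boot all_order all_algebra.
From mathcomp Require Import all_classical all_reals all_analysis.
From mathcomp Require Import ring lra.
Import Order.TTheory GRing.Theory Num.Theory.
Import numFieldNormedType.Exports.
Local Open Scope ring_scope.
Lemma lat_bound (R : realType) (Y : completeNormedModType R)
    (le : Y -> Y -> Prop) (a z b : Y) :
  banach_lattice le -> le a z -> le z b -> `|z| <= `|a| + `|b|.
Proof.
move=> [[refl _ trans sup] [addc scalc normc]] az zb.
have opp x y : le x y -> le (- y) (- x).
  move=> /(addc _ _ (- x - y)).
  by rewrite addrA subrr add0r addrCA subrr addr0.
have pos x u : is_sup le x (- x) u -> le 0 u.
  case=> xu nxu _.
  have h1 := addc _ _ (- x) xu; rewrite subrr in h1.
  have h2 := addc _ _ u nxu.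
  have h3 := trans _ _ _ h1 (eq_ind _ (fun w => le w (u + u)) h2 _ (addrC _ _)).
  have e : (2^-1:R) *: (u + u) = u.
    by rewrite -mulr2n -[u *+ 2]scaler_nat scalerA mulVf ?scale1r // pnatr_eq0.
  have := scalc (2^-1) _ _ _ h3; rewrite scaler0 e; apply.
  by rewrite invr_ge0.
have [u su] := sup a (- a).
have [v sv] := sup b (- b).
have u0 := pos _ _ su; have v0 := pos _ _ sv.
have absle x w : is_sup le x (- x) w -> `|w| <= `|x|.
  move=> s; have p := pos _ _ s.
  have [aw0 saw0] := sup w (- w).
  apply: (normc _ _ _ _ saw0 s).
  case: saw0 => _ _; apply; first exact: refl.
  apply: (trans _ _ _ _ p); by have := opp _ _ p; rewrite oppr0.
have vw : le v (u + v).
  by have := addc _ _ v u0; rewrite add0r.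
have uw : le u (u + v).
  by have := addc _ _ u v0; rewrite add0r addrC.
have [az0 saz] := sup z (- z).
have [aw saw] := sup (u + v) (- (u + v)).
have : `|z| <= `|u + v|.
  apply: (normc _ _ _ _ saz saw).
  case: saz => _ _ H; have {}H := H (u + v).
  case: saw => H1 _ _.
  apply: (trans _ _ _ _ H1); apply: H.
    apply: (trans _ _ _ _ vw); apply: (trans _ _ _ zb); by case: sv.
  apply: (trans _ _ _ _ uw); apply: (trans _ _ _ (opp _ _ az)); by case: su.
move=> h; apply: le_trans h _; apply: le_trans (ler_normD _ _) _.
by apply: lerD; [apply: absle su | apply: absle sv].
Qed.
Lemma upper_cvx (R : realType) (X Y : completeNormedModType R)
    (le : Y -> Y -> Prop) (S : X -> Y) (t : R) (x y : X) :
  banach_lattice le -> convex_op le S -> 0 < t <= 1 ->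
  le (S (x + y) - S x) (t *: (S (x + t^-1 *: y) - S x)).
Proof.
move=> [_ [addc _ _]] cvx /andP[t0 t1].
have := cvx (x + t^-1 *: y) x t; rewrite t1 (ltW t0) => /(_ isT).
have -> : t *: (x + t^-1 *: y) + (1 - t) *: x = x + y.
  rewrite scalerDr scalerA mulfV ?gt_eqF // scale1r scalerBl scale1r.
  by rewrite addrAC addrCA subrr addr0 addrC.
move=> /(addc _ _ (- S x)).
suff -> : t *: S (x + t^-1 *: y) + (1 - t) *: S x - S x
  = t *: (S (x + t^-1 *: y) - S x) by [].
by rewrite scalerBr scalerBl scale1r addrCA [_ + _ - S x]addrC addKr.
Qed.

Lemma lower_cvx (R : realType) (X Y : completeNormedModType R)
    (le : Y -> Y -> Prop) (S : X -> Y) (x y : X) :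
  banach_lattice le -> convex_op le S ->
  le (- (S (x - y) - S x)) (S (x + y) - S x).
Proof.
move=> [_ [addc scalc _]] cvx.
have h : (1 - 2^-1 : R) = 2^-1 by field.
have h2 : (0 <= (2^-1 : R) <= 1).
  by rewrite invr_ge0 ler0n /= invf_le1 // ler1n.
have := cvx (x + y) (x - y) (2^-1) h2; rewrite h.
rewrite -scalerDr addrACA subrr addr0 -mulr2n -[x *+ 2]scaler_nat scalerA mulVf ?pnatr_eq0 // scale1r.
move=> /(scalc 2 _ _ (ler0n _ 2)).
rewrite scalerDr !scalerA mulfV ?pnatr_eq0 // !scale1r scaler_nat mulr2n.
move=> /(addc _ _ (- S x - S (x - y))).
suff -> : S x + S x + (- S x - S (x - y)) = - (S (x - y) - S x).
  suff -> : S (x + y) + S (x - y) + (- S x - S (x - y)) = S (x + y) - S x by [].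
  by rewrite addrACA subrr addr0.
by rewrite addrACA subrr add0r opprB.
Qed.

Lemma opp_le (R : realType) (Y : completeNormedModType R)
    (le : Y -> Y -> Prop) (x y : Y) :
  banach_lattice le -> le x y -> le (- y) (- x).
Proof.
move=> [_ [addc _ _]] /(addc _ _ (- x - y)).
by rewrite addrA subrr add0r addrCA subrr addr0.
Qed.

Lemma trans_le (R : realType) (Y : completeNormedModType R)
    (le : Y -> Y -> Prop) (x y z : Y) :
  banach_lattice le -> le x y -> le y z -> le x z.
Proof. by move=> [[_ _ tr _] _]; apply: tr. Qed.

Lemma sx_lip (R : realType) (X Y : completeNormedModType R)
    (le : Y -> Y -> Prop) (S : X -> Y) (x : X) (r M : R) :
  banach_lattice le -> convex_op le S -> 0 < r ->
  (forall y, `|y| <= r -> `|Sx S x y| <= M) ->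
  forall y, `|y| <= r -> `|Sx S x y| <= 2 * M / r * `|y|.
Proof.
move=> bl cvx r0 HM y yr.
have [->|y0] := eqVneq y 0.
  by rewrite /Sx addr0 subrr !normr0 mulr0.
set t := `|y| / r.
have t0 : 0 < t by rewrite divr_gt0 // normr_gt0.
have t1 : t <= 1 by rewrite ler_pdivrMr // mul1r.
have tt : 0 < t <= 1 by rewrite t0 t1.
have nt : forall w : X, `|w| = `|y| -> `|t^-1 *: w| <= r.
  move=> w wy; rewrite normrZ ger0_norm ?invr_ge0 ?(ltW t0) // wy.
  by rewrite /t invf_div mulrAC -mulrA divff ?normr_eq0 // mulr1.
have tdef : t = `|y| / r by [].
clearbody t.
have up := @upper_cvx _ _ _ _ S t x y bl cvx tt.
have lo := @lower_cvx _ _ _ _ S x y bl cvx.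
have up2 := @opp_le _ _ _ _ _ bl (@upper_cvx _ _ _ _ S t x (- y) bl cvx tt).
have := @lat_bound _ _ _ _ _ _ bl (@trans_le _ _ _ _ _ _ bl up2 lo) up.
move=> h; apply: le_trans h _.
rewrite normrN !normrZ ger0_norm ?(ltW t0) //.
have h1 : `|S (x + t^-1 *: - y) - S x| <= M by apply: HM; apply: nt; rewrite normrN.
have h2 : `|S (x + t^-1 *: y) - S x| <= M by apply: HM; apply: nt.
apply: le_trans (_ : t * M + t * M <= _).
  by apply: lerD; apply: ler_wpM2l => //; apply: ltW.
rewrite tdef le_eqVlt; apply/orP; left; apply/eqP. field. by rewrite gt_eqF.
Qed.

Theorem lemmaA2 (R : realType) (X Y : completeNormedModType R)
    (leX : X -> X -> Prop) (leY : Y -> Y -> Prop) (S : X -> Y) :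
  banach_lattice leX -> banach_lattice leY -> convex_op leY S ->
  (continuous S <-> forall x : X, exists2 r : R, 0 < r & bounded_on_ball (Sx S x) r).
Proof.
move=> _ bl cvx; split.
  move=> cS x.
  have := cS x; move=> /cvgrPdist_lt /(_ 1 ltr01) /nbhs_ballP [e e0 Hb].
  exists (e / 2); first by rewrite divr_gt0.
  exists 1 => y ye.
  rewrite /Sx distrC; apply: ltW; apply: Hb.
  rewrite -ball_normE /ball_ /= opprD addrA subrr add0r normrN.
  by apply: le_lt_trans ye _; rewrite ltr_pdivrMr // ltr_pMr // ltr1n.
move=> H x.
have [r r0 [M HM]] := H x.
have lip := @sx_lip _ _ _ _ S x r M bl cvx r0 HM.
set K := 2 * M / r in lip.
apply/cvgrPdist_le => eps eps0.
have d0 : 0 < Num.min r (eps / (`|K| + 1)).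
  by rewrite lt_min r0 divr_gt0 // ltr_wpDl.
apply/nbhs_ballP; exists (Num.min r (eps / (`|K| + 1))) => // z.
rewrite -ball_normE /ball_ /= lt_min => /andP[zr ze].
have := lip (z - x).
rewrite /Sx addrCA subrr addr0 distrC => h.
rewrite distrC; apply: le_trans (h (ltW zr)) _.
apply: le_trans (_ : `|K| * `|x - z| <= _).
  by apply: ler_wpM2r => //; apply: ler_norm.
apply: le_trans (_ : `|K| * (eps / (`|K| + 1)) <= _).
  by apply: ler_wpM2l => //; apply: ltW.
rewrite mulrA ler_pdivrMr ?ltr_wpDl //.
nra.
Qed.
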